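(* Let $(A,\Delta)$ be a graded connected coalgebra, $1_A$ the unique element of $A_0$ with $\varepsilon(1_A)=1$, and $\lambda:A\to\mathbb{K}$ a linear form with $\lambda(1_A)=1$. (1) There exists a unique coalgebra morphism $\psi:(A,\Delta)\to(\mathbb{K}[X],\Delta)$ such that $\varepsilon'\circ\psi=\lambda$. (2) If $(A,m,\Delta)$ is a bialgebra, then $\psi$ is a bialgebra morphism $(A,m,\Delta)\to(\mathbb{K}[X],m,\Delta)$ if and only if $\lambda$ is a character of $A$. (3) If $(A,m,\Delta,\delta)$ is a bialgebra in cointeraction, then $\psi$ is a morphism of bialgebras in cointeraction $(A,m,\Delta,\delta)\to(\mathbb{K}[X],m,\Delta,\delta)$ if and only if $\lambda$ is the counit $\varepsilon'$ of $(A,m,\delta)$.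
   Context: Work over a field $\mathbb{K}$ of characteristic zero. A graded connected coalgebra is a coalgebra $A=\bigoplus_{n\ge0}A_n$ with $\Delta(A_n)\subseteq\bigoplus_{i+j=n}A_i\otimes A_j$ and $A_0$ one-dimensional. On $\mathbb{K}[X]$: usual product $m$; coproducts $\Delta(X)=X\otimes1+1\otimes X$ and $\delta(X)=X\otimes X$, extended multiplicatively (so $\Delta(P)(X,Y)=P(X+Y)$, $\delta(P)(X,Y)=P(XY)$); counit of $\Delta$ is $P\mapsto P(0)$, counit of $\delta$ is $\varepsilon'(P)=P(1)$. A character of an algebra is an algebra morphism to $\mathbb{K}$. A bialgebra in cointeraction is $(A,m,\Delta,\delta)$ where $(A,m,\Delta)$ and $(A,m,\delta)$ are bialgebras and $(\Delta\otimes Id)\circ\delta=m_{1,3,24}\circ(\delta\otimes\delta)\circ\Delta$, with $m_{1,3,24}(a\otimes b\otimes c\otimes d)=a\otimes c\otimes bd$; a morphism of such is a linear map that is a bialgebra morphism for both structures. In (3), $A$ is as in the hypothesis (graded connected for $\Delta$). *)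

(* Defs.v *)
From HB Require Import structures.
From mathcomp Require Import all_boot all_order all_algebra.
Set Implicit Arguments. Unset Strict Implicit. Unset Printing Implicit Defensive.
Import GRing.Theory.
Local Open Scope ring_scope.

(* An element of V (x) W
   (V, W vector spaces over a field K) is represented by a finite formal sum
   s = [:: (x_1,y_1); ...; (x_k,y_k)] standing for  sum_i x_i (x) y_i.
   Two such representatives denote the same tensor iff they agree under
   every bilinear form V x W -> K (bilinear forms = (V (x) W)^*, which
   separate the points of V (x) W over a field).  Same for three factors. *)

Section Tensors.
Variable K : fieldType.

Definition linform (A : lmodType K) (f : A -> K) :=
  forall (c : K) (x y : A), f (c *: x + y) = c * f x + f y.

Definition linmap (A B : lmodType K) (f : A -> B) :=
  forall (c : K) (x y : A), f (c *: x + y) = c *: f x + f y.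

Definition bilinform (A B : lmodType K) (f : A -> B -> K) :=
  (forall y, linform (fun x => f x y)) /\ (forall x, linform (f x)).

Definition trilinform (A B C : lmodType K) (f : A -> B -> C -> K) :=
  [/\ forall y z, linform (fun x => f x y z),
      forall x z, linform (fun y => f x y z)
    & forall x y, linform (f x y)].

Definition teq2 (A B : lmodType K) (s t : seq (A * B)) :=
  forall f : A -> B -> K, bilinform f ->
    \sum_(p <- s) f p.1 p.2 = \sum_(p <- t) f p.1 p.2.

Definition teq3 (A B C : lmodType K) (s t : seq (A * B * C)) :=
  forall f : A -> B -> C -> K, trilinform f ->
    \sum_(p <- s) f p.1.1 p.1.2 p.2 = \sum_(p <- t) f p.1.1 p.1.2 p.2.

Section Coalg.
Variable A : lmodType K.
Variables (Delta : A -> seq (A * A)) (eps : A -> K).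

Definition coalgebra :=
  [/\
      forall c x y, teq2 (Delta (c *: x + y))
                         ([seq (c *: p.1, p.2) | p <- Delta x] ++ Delta y),
      linform eps,
      forall a, teq3 [seq (q.1, q.2, p.2) | p <- Delta a, q <- Delta p.1]
                     [seq (p.1, q.1, q.2) | p <- Delta a, q <- Delta p.2],
      forall a, \sum_(p <- Delta a) eps p.1 *: p.2 = a
    & forall a, \sum_(p <- Delta a) eps p.2 *: p.1 = a].

Definition graded_connected_coalgebra (gr : nat -> A -> Prop) :=
  coalgebra /\
  [/\
      forall n, gr n 0 /\ (forall c x y, gr n x -> gr n y -> gr n (c *: x + y)),
      forall a, exists (N : nat) (f : nat -> A),
         (forall i, gr i (f i)) /\ a = \sum_(i < N) f i,
      forall (N : nat) (f : nat -> A), (forall i, gr i (f i)) ->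
         \sum_(i < N) f i = 0 -> forall i, (i < N)%N -> f i = 0,
      forall n a, gr n a -> exists t : seq (A * A), teq2 (Delta a) t /\
         forall p, p \in t -> exists i j, (i + j = n)%N /\ gr i p.1 /\ gr j p.2
    &
      exists e, [/\ gr 0 e, e != 0 & forall x, gr 0 x -> exists c : K, x = c *: e]].

End Coalg.

Section Bialg.
Variable A : lmodType K.
Variables (m : A -> A -> A) (u : A).

Definition algebra_str :=
  [/\ forall x, linmap (m x), forall y, linmap (fun x => m x y),
      forall x y z, m x (m y z) = m (m x y) z,
      forall x, m u x = x & forall x, m x u = x].

Definition tmul (s t : seq (A * A)) :=
  [seq (m p.1 q.1, m p.2 q.2) | p <- s, q <- t].

Definition bialgebra (Delta : A -> seq (A * A)) (eps : A -> K) :=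
  [/\ algebra_str, coalgebra Delta eps,
      (forall a b, teq2 (Delta (m a b)) (tmul (Delta a) (Delta b))) /\
      teq2 (Delta u) [:: (u, u)],
      forall a b, eps (m a b) = eps a * eps b
    & eps u = 1].

Definition character (l : A -> K) :=
  [/\ linform l, forall a b, l (m a b) = l a * l b & l u = 1].

Definition cointeraction (Delta : A -> seq (A * A)) (eps : A -> K)
    (delta : A -> seq (A * A)) (epsd : A -> K) :=
  [/\ bialgebra Delta eps, bialgebra delta epsd
    & (* (Delta (x) Id) o delta = m_{1,3,24} o (delta (x) delta) o Delta *)
      forall a, teq3 [seq (q.1, q.2, p.2) | p <- delta a, q <- Delta p.1]
                     [seq (qr.1.1, qr.2.1, m qr.1.2 qr.2.2) |
                        p <- Delta a,
                        qr <- [seq (q, r) | q <- delta p.1, r <- delta p.2]]].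
End Bialg.

Section Morph.
Variables A B : lmodType K.
Variable f : A -> B.

Definition coalg_morph (DA : A -> seq (A * A)) (eA : A -> K)
                       (DB : B -> seq (B * B)) (eB : B -> K) :=
  [/\ linmap f,
      forall a, teq2 [seq (f p.1, f p.2) | p <- DA a] (DB (f a))
    & forall a, eB (f a) = eA a].

Definition alg_morph (mA : A -> A -> A) (uA : A) (mB : B -> B -> B) (uB : B) :=
  [/\ linmap f, forall a b, f (mA a b) = mB (f a) (f b) & f uA = uB].

Definition bialg_morph mA uA (DA : A -> seq (A * A)) (eA : A -> K)
                       mB uB (DB : B -> seq (B * B)) (eB : B -> K) :=
  alg_morph mA uA mB uB /\ coalg_morph DA eA DB eB.

Definition cointeraction_morph mA uA DA eA dA edA mB uB DB eB dB edB :=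
  bialg_morph mA uA DA eA mB uB DB eB /\ bialg_morph mA uA dA edA mB uB dB edB.
End Morph.

(* Delta(P)(X,Y) = P(X+Y) = sum_i p_i sum_{j<=i} C(i,j) X^j (x) X^(i-j) *)
Definition poly_Delta (P : {poly K}) : seq ({poly K} * {poly K}) :=
  [seq ((P`_i *+ 'C(i, j)) *: 'X^j, 'X^(i - j)) | i <- iota 0 (size P), j <- iota 0 i.+1].
Definition poly_eps (P : {poly K}) : K := P.[0].
(* delta(P)(X,Y) = P(XY) = sum_i p_i X^i (x) X^i *)
Definition poly_delta (P : {poly K}) : seq ({poly K} * {poly K}) :=
  [seq (P`_i *: 'X^i, 'X^i) | i <- iota 0 (size P)].
Definition poly_eps' (P : {poly K}) : K := P.[1].

End Tensors.

(* Main.v *)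
Require Import Defs.
From mathcomp Require Import all_boot all_order all_algebra.
From mathcomp Require Import ring.
From Stdlib Require Import IndefiniteDescription FunctionalExtensionality.
Import GRing.Theory.
Local Open Scope ring_scope.
Set Implicit Arguments. Unset Strict Implicit.

Section Gen.
Variable K : fieldType.
Hypothesis charK0 : [pchar K] =i pred0.

Lemma lf0 (A : lmodType K) (f : A -> K) : linform f -> f 0 = 0.
Proof.
move=> H; have := H 1 0 0; rewrite scale1r addr0 mul1r.
by move/(congr1 (fun z => z - f 0)); rewrite addrK subrr => ->.
Qed.

Lemma lfZ (A : lmodType K) (f : A -> K) c x : linform f -> f (c *: x) = c * f x.
Proof. by move=> H; have := H c x 0; rewrite addr0 lf0 // addr0. Qed.

Lemma lfD (A : lmodType K) (f : A -> K) x y : linform f -> f (x + y) = f x + f y.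
Proof. by move=> H; have := H 1 x y; rewrite scale1r mul1r. Qed.

Lemma lf_sum (A : lmodType K) (f : A -> K) I (r : seq I) (P : pred I) F :
  linform f -> f (\sum_(i <- r | P i) F i) = \sum_(i <- r | P i) f (F i).
Proof.
move=> H; apply: (big_morph f (id1:=0) (op1:=+%R)); last exact: lf0.
by move=> x y; apply: lfD.
Qed.

Lemma lfB (A : lmodType K) (f g : A -> K) : linform f -> linform g ->
  linform (fun x => f x - g x).
Proof. by move=> Hf Hg c x y; rewrite Hf Hg; ring. Qed.

Lemma bil_prod (A B : lmodType K) (f : A -> K) (g : B -> K) :
  linform f -> linform g -> bilinform (fun x y => f x * g y).
Proof.
move=> Hf Hg; split=> [y c x x'|x c y y'] /=.
  by rewrite Hf mulrDl mulrA.
by rewrite Hg mulrDr mulrCA.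
Qed.

Lemma tri_prod (A B C : lmodType K) (f : A -> K) (g : B -> K) (h : C -> K) :
  linform f -> linform g -> linform h -> trilinform (fun x y z => f x * g y * h z).
Proof.
move=> Hf Hg Hh; split=> [y z c x x'|x z c y y'|x y c z z'] /=.
- by rewrite Hf !mulrDl !mulrA.
- by rewrite Hg mulrDr mulrDl !mulrA (mulrC (f x) c).
- by rewrite Hh mulrDr mulrCA.
Qed.

Lemma hornerlin (x : K) : linform (fun P : {poly K} => P.[x]).
Proof. by move=> c P Q; rewrite hornerD hornerZ. Qed.

Lemma natr_inj m n : m%:R = n%:R :> K -> m = n.
Proof.
have H k : (k%:R == 0 :> K) = (k == 0)%N by move: k; apply/pcharf0P.
wlog le : m n / (m <= n)%N.
  by move=> W E; case: (leqP m n) => [|/ltnW] h; [apply: W|apply/esym/W].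
move=> E; apply/eqP; rewrite eqn_leq le /= -subn_eq0 -H natrB // E subrr //.
Qed.

Lemma poly_zero (P : {poly K}) : (forall l, P.[l.+1%:R] = 0) -> P = 0.
Proof.
move=> HP; apply: (@roots_geq_poly_eq0 _ P [seq l.+1%:R | l <- iota 0 (size P)]).
- by apply/allP => x /mapP [l _ ->]; rewrite /root HP.
- by rewrite map_inj_uniq ?iota_uniq // => a b /natr_inj; case.
- by rewrite size_map size_iota.
Qed.

Lemma poly_ext (P Q : {poly K}) : (forall l, P.[l.+1%:R] = Q.[l.+1%:R]) -> P = Q.
Proof.
move=> H; apply/eqP; rewrite -subr_eq0; apply/eqP/poly_zero => l.
by rewrite hornerD hornerN H subrr.
Qed.

End Gen.
Arguments lf_sum {K A f I r P F}.
Arguments lfZ {K A f c x}.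
Arguments lfD {K A f x y}.
Arguments lf0 {K A f}.

Section L2.
Variable K : fieldType.
Hypothesis charK0 : [pchar K] =i pred0.

Lemma polyB (P : {poly K}) B : (size P <= B)%N -> P = \sum_(i < B) P`_i *: 'X^i.
Proof.
move=> h; rewrite -poly_def; apply/polyP => j; rewrite coef_poly.
case: ifP => // /negbT; rewrite -leqNgt => h2; rewrite nth_default //.
exact: leq_trans h h2.
Qed.

Lemma bil_expand (F : {poly K} -> {poly K} -> K) B (P Q : {poly K}) : bilinform F ->
  (size P <= B)%N -> (size Q <= B)%N ->
  F P Q = \sum_(i < B) \sum_(j < B) P`_i * Q`_j * F 'X^i 'X^j.
Proof.
move=> [H1 H2] hP hQ.
rewrite {1}(polyB hP) (lf_sum (H1 Q)); apply: eq_bigr => i _.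
rewrite (lfZ (H1 Q)) {1}(polyB hQ) (lf_sum (H2 _)) mulr_sumr.
by apply: eq_bigr => j _; rewrite (lfZ (H2 _)) mulrA.
Qed.

Lemma teq2_eval (s t : seq ({poly K} * {poly K})) :
  (forall k l, \sum_(p <- s) p.1.[k.+1%:R] * p.2.[l.+1%:R]
             = \sum_(p <- t) p.1.[k.+1%:R] * p.2.[l.+1%:R]) -> teq2 s t.
Proof.
move=> H.
have sumC (r : seq ({poly K} * {poly K})) (c : _ -> K) (f : _ -> {poly K}) i :
    (\sum_(p <- r) c p *: f p)`_i = \sum_(p <- r) c p * (f p)`_i.
  by rewrite coef_sum; apply: eq_bigr => p _; rewrite coefZ.
have sumH (r : seq ({poly K} * {poly K})) (c : _ -> K) (f : _ -> {poly K}) x :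
    (\sum_(p <- r) c p *: f p).[x] = \sum_(p <- r) c p * (f p).[x].
  by rewrite horner_sum; apply: eq_bigr => p _; rewrite hornerZ.
have S1 l : \sum_(p <- s) p.2.[l.+1%:R] *: p.1 = \sum_(p <- t) p.2.[l.+1%:R] *: p.1.
  apply: (poly_ext charK0) => k; rewrite !sumH.
  rewrite (eq_bigr (fun p : {poly K} * {poly K} => p.1.[k.+1%:R] * p.2.[l.+1%:R])); last by move=> p _; rewrite mulrC.
  rewrite [in RHS](eq_bigr (fun p : {poly K} * {poly K} => p.1.[k.+1%:R] * p.2.[l.+1%:R])); last by move=> p _; rewrite mulrC.
  exact: H.
have S2 i : \sum_(p <- s) p.1`_i *: p.2 = \sum_(p <- t) p.1`_i *: p.2.
  apply: (poly_ext charK0) => l; rewrite !sumH.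
  have := congr1 (fun P : {poly K} => P`_i) (S1 l); rewrite /= !sumC => E.
  rewrite (eq_bigr (fun p : {poly K} * {poly K} => p.2.[l.+1%:R] * p.1`_i)); last by move=> p _; rewrite mulrC.
  rewrite [in RHS](eq_bigr (fun p : {poly K} * {poly K} => p.2.[l.+1%:R] * p.1`_i)); last by move=> p _; rewrite mulrC.
  exact: E.
have S3 i j : \sum_(p <- s) p.1`_i * p.2`_j = \sum_(p <- t) p.1`_i * p.2`_j.
  by have := congr1 (fun P : {poly K} => P`_j) (S2 i); rewrite /= !sumC.
move=> F HF.
set B := \max_(p <- s ++ t) maxn (size p.1) (size p.2).
have hB p : p \in s ++ t -> (size p.1 <= B)%N /\ (size p.2 <= B)%N.
  move=> pin; have := @leq_bigmax_seq _ (s ++ t) xpredT (fun p : {poly K} * {poly K} => maxn (size p.1) (size p.2)) p pin (erefl true).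
  by rewrite geq_max => /andP.
have E r : {subset r <= s ++ t} -> \sum_(p <- r) F p.1 p.2 =
   \sum_(i < B) \sum_(j < B) (\sum_(p <- r) p.1`_i * p.2`_j) * F 'X^i 'X^j.
  move=> sub; rewrite big_seq (eq_bigr (fun p : {poly K} * {poly K} => \sum_(i < B) \sum_(j < B) p.1`_i * p.2`_j * F 'X^i 'X^j)); last first.
    by move=> p /sub /hB [h1 h2]; apply: bil_expand.
  rewrite -big_seq exchange_big; apply: eq_bigr => i _.
  rewrite exchange_big; apply: eq_bigr => j _.
  by rewrite mulr_suml.
rewrite E; last by move=> p pin; rewrite mem_cat pin.
rewrite E; last by move=> p pin; rewrite mem_cat pin orbT.
by apply: eq_bigr => i _; apply: eq_bigr => j _; rewrite S3.
Qed.

Lemma polyDelta_eval (P : {poly K}) x y :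
  \sum_(p <- poly_Delta P) p.1.[x] * p.2.[y] = P.[x + y].
Proof.
rewrite /poly_Delta big_allpairs_dep /= (horner_coef_wide _ (leqnn _)).
rewrite -(big_mkord xpredT (fun i => P`_i * (x + y) ^+ i)) /index_iota subn0.
apply: eq_bigr => i _; rewrite addrC exprDn mulr_sumr.
rewrite -(big_mkord xpredT (fun j => P`_i * ((y ^+ (i - j) * x ^+ j) *+ 'C(i, j)))).
rewrite /index_iota subn0; apply: eq_bigr => j _ /=.
rewrite hornerZ hornerXn hornerXn mulrnAl mulrnAr; ring.
Qed.

Lemma polydelta_eval (P : {poly K}) x y :
  \sum_(p <- poly_delta P) p.1.[x] * p.2.[y] = P.[x * y].
Proof.
rewrite /poly_delta big_map (horner_coef_wide _ (leqnn _)).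
rewrite -(big_mkord xpredT (fun i => P`_i * (x * y) ^+ i)) /index_iota subn0.
by apply: eq_bigr => i _ /=; rewrite hornerZ !hornerXn exprMn mulrA.
Qed.

Fixpoint binp (n : nat) : {poly K} :=
  if n is n'.+1 then (n'.+1%:R)^-1 *: (binp n' * ('X - n'%:R%:P)) else 1.

Lemma binp_eval n k : (binp n).[k%:R] = ('C(k, n))%:R.
Proof.
elim: n => [|n IH] /=; first by rewrite hornerC bin0.
rewrite hornerZ hornerM IH hornerXsubC.
have nz : (n.+1%:R : K) != 0 by move/pcharf0P: charK0 => ->.
case: (leqP n k) => hk.
  rewrite -natrB // -natrM mulnC -mul_bin_left natrM mulrA mulVf // mul1r //.
by rewrite !bin_small ?mul0r ?mulr0 // ltnS ltnW.
Qed.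

End L2.

Section Misc.
Variable K : fieldType.
Lemma sum_ext0 (F : nat -> K) n m : (n <= m)%N ->
  (forall i, (n <= i)%N -> (i < m)%N -> F i = 0) ->
  \sum_(i < n) F i = \sum_(i < m) F i.
Proof.
elim: m => [|m IH] le H.
  by move: le; rewrite leqn0 => /eqP ->.
case: (leqP n m) => h.
  rewrite big_ord_recr /= H // addr0; apply: IH => // i h1 h2.
  by apply: H => //; apply: ltnW.
by have -> : n = m.+1 by apply/eqP; rewrite eqn_leq le h.
Qed.

Lemma pascal (F : nat -> K) k :
  \sum_(n < k.+1) 'C(k, n)%:R * (F n.+1 + F n)
  = \sum_(n < k.+2) 'C(k.+1, n)%:R * F n.
Proof.
rewrite [RHS]big_ord_recl /=.
under [X in _ = _ + X]eq_bigr => i _ do rewrite /bump /= binS natrD mulrDl.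
rewrite big_split /=; under eq_bigr => i _ do rewrite mulrDr.
rewrite big_split /= [X in _ = _ + X]addrC addrCA; congr (_ + _).
rewrite [in RHS]big_ord_recr /= (bin_small (ltnSn k)) mul0r addr0.
by rewrite big_ord_recl /= !bin0.
Qed.
End Misc.

Section Coal.
Variable K : fieldType.
Variables (A : lmodType K) (Delta : A -> seq (A * A)) (eps : A -> K).
Hypothesis Hco : coalgebra Delta eps.

Definition conv (f g : A -> K) a := \sum_(p <- Delta a) f p.1 * g p.2.

Fixpoint pw (l : A -> K) n := if n is n'.+1 then conv (pw l n') l else eps.

Lemma eps_lin : @linform K A eps. Proof. by case: Hco. Qed.

Lemma conv_teq (f g : A -> K) (s t : seq (A * A)) : linform f -> linform g -> teq2 s t ->
  \sum_(p <- s) f p.1 * g p.2 = \sum_(p <- t) f p.1 * g p.2.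
Proof. by move=> Hf Hg H; apply: (H _ (bil_prod Hf Hg)). Qed.

Lemma conv_lin (f g : A -> K) : linform f -> linform g -> linform (conv f g).
Proof.
move=> Hf Hg c x y; case: Hco => HD _ _ _ _.
rewrite /conv (conv_teq Hf Hg (HD c x y)) big_cat /= big_map mulr_sumr.
by congr (_ + _); apply: eq_bigr => p _; rewrite (lfZ Hf) mulrA.
Qed.

Lemma pw_lin (l : A -> K) n : linform l -> linform (pw l n).
Proof. by move=> Hl; elim: n => [|n IH] /=; [exact: eps_lin | exact: conv_lin]. Qed.

Lemma cR (f : A -> K) a : linform f -> \sum_(p <- Delta a) f p.1 * eps p.2 = f a.
Proof.
case: Hco => _ _ _ _ H2 Hf.
transitivity (f (\sum_(p <- Delta a) eps p.2 *: p.1)); last by rewrite H2.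
rewrite (lf_sum Hf).
by apply: eq_bigr => p _; rewrite (lfZ Hf) mulrC.
Qed.

Lemma cL (f : A -> K) a : linform f -> \sum_(p <- Delta a) eps p.1 * f p.2 = f a.
Proof.
case: Hco => _ _ _ H1 _ Hf.
transitivity (f (\sum_(p <- Delta a) eps p.1 *: p.2)); last by rewrite H1.
rewrite (lf_sum Hf).
by apply: eq_bigr => p _; rewrite (lfZ Hf).
Qed.

Lemma pw1 (l : A -> K) a : linform l -> pw l 1 a = l a.
Proof. by move=> Hl; rewrite /= /conv cL. Qed.

Lemma pw_add (l : A -> K) k m a : linform l ->
  \sum_(p <- Delta a) pw l k p.1 * pw l m p.2 = pw l (k + m) a.
Proof.
move=> Hl; elim: m a => [|m IH] a.
  by rewrite addn0 /= cR //; apply: pw_lin.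
case: Hco => _ _ Hcoas _ _.
have T := Hcoas a _ (tri_prod (pw_lin k Hl) (pw_lin m Hl) Hl).
rewrite !big_allpairs_dep /= in T.
rewrite addnS /= /conv.
transitivity (\sum_(p <- Delta a) \sum_(q <- Delta p.2) pw l k p.1 * pw l m q.1 * l q.2).
  by apply: eq_bigr => p _; rewrite /conv mulr_sumr; apply: eq_bigr => q _; rewrite mulrA.
rewrite -T; apply: eq_bigr => p _; rewrite -IH mulr_suml.
by apply: eq_bigr.
Qed.

Definition eta (l : A -> K) x := l x - eps x.

Lemma eta_lin (l : A -> K) : linform l -> linform (eta l).
Proof. by move=> Hl; apply: lfB => //; exact: eps_lin. Qed.

Lemma pw_binom (l : A -> K) k a : linform l ->
  pw l k a = \sum_(n < k.+1) 'C(k, n)%:R * pw (eta l) n a.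
Proof.
move=> Hl; elim: k a => [|k IH] a.
  by rewrite big_ord_recl big_ord0 /= bin0 mul1r addr0.
rewrite -(pascal (fun n => pw (eta l) n a)) /= /conv.
rewrite (eq_bigr (fun p => \sum_(n < k.+1) 'C(k, n)%:R * (pw (eta l) n p.1 * l p.2))); last first.
  by move=> p _; rewrite IH mulr_suml; apply: eq_bigr => n _; rewrite mulrA.
rewrite exchange_big /=; apply: eq_bigr => n _.
rewrite -mulr_sumr; congr (_ * _).
rewrite /= /conv -(cR _ (pw_lin n (eta_lin Hl))) -big_split /=.
by apply: eq_bigr => p _; rewrite -mulrDr /eta subrK.
Qed.

Lemma morph_eval (l : A -> K) (psi : A -> {poly K}) :
  coalg_morph psi Delta eps (@poly_Delta K) (@poly_eps K) ->
  (forall a, poly_eps' (psi a) = l a) ->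
  forall k a, (psi a).[k%:R] = pw l k a.
Proof.
move=> [Hlin Hteq Heps] Hl k; elim: k => [|k IH] a.
  by rewrite /= -Heps.
have T := Hteq a _ (bil_prod (hornerlin k%:R) (hornerlin 1)).
rewrite polyDelta_eval big_map /= in T.
rewrite -natr1 -T /conv; apply: eq_bigr => p _.
by rewrite IH -Hl.
Qed.

End Coal.

Section Graded.
Variable K : fieldType.
Hypothesis charK0 : [pchar K] =i pred0.
Variables (A : lmodType K) (gr : nat -> A -> Prop)
  (Delta : A -> seq (A * A)) (eps : A -> K).
Hypothesis HA : graded_connected_coalgebra Delta eps gr.
Variable lam : A -> K.
Hypothesis Hlam : linform lam.
Hypothesis Hlam1 : forall one : A, gr 0%N one -> eps one = 1 -> lam one = 1.

Let Hco : coalgebra Delta eps. Proof. by case: HA. Qed.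
Let Heps : linform eps. Proof. exact: eps_lin Hco. Qed.

Lemma eta0 x : gr 0%N x -> eta eps lam x = 0.
Proof.
case: HA => _ [Hsub _ _ Hgrad [e [e0 _ He]]].
suff E : lam e = eps e.
  by move=> /He [c ->]; rewrite /eta (lfZ Hlam) (lfZ Heps) E subrr.
case: (eqVneq (eps e) 0) => h.
  rewrite h -(cL Hco e Hlam).
  have [t [Ht Hin]] := Hgrad 0%N e e0.
  rewrite (conv_teq Heps Hlam Ht); apply: big1_seq => p /andP [_ /Hin].
  move=> [i [j [ij [g1 g2]]]].
  move: ij => /eqP; rewrite addn_eq0 => /andP [/eqP i0 _]; subst i.
  by have [c ->] := He _ g1; rewrite (lfZ Heps) h mulr0 mul0r.
have g1 : gr 0%N ((eps e)^-1 *: e).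
  by have := (Hsub 0%N).2 ((eps e)^-1) e 0 e0 (Hsub 0%N).1; rewrite addr0.
have e1 : eps ((eps e)^-1 *: e) = 1 by rewrite (lfZ Heps) mulVf.
have := Hlam1 g1 e1; rewrite (lfZ Hlam) => /(congr1 (fun z => eps e * z)).
by rewrite mulrA mulfV // mul1r mulr1.
Qed.

Lemma nil_gr d : forall a, gr d a -> forall n, (d < n)%N -> pw Delta eps (eta eps lam) n a = 0.
Proof.
elim/ltn_ind: d => d IH a ga [|n] // hd.
case: HA => _ [_ _ _ Hgrad _].
have [t [Ht Hin]] := Hgrad d a ga.
rewrite /= /conv (conv_teq (pw_lin Hco n (eta_lin Hco Hlam)) (eta_lin Hco Hlam) Ht).
apply: big1_seq => p /andP [_ /Hin] [i [j [ij [g1 g2]]]].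
case: j ij g2 => [|j] ij g2.
  by rewrite eta0 // mulr0.
have hid : (i < d)%N by rewrite -ij addnS ltnS leq_addr.
by rewrite (IH i hid p.1 g1 n (leq_trans hid hd)) mul0r.
Qed.

Lemma nilp a : exists N, forall n, (N <= n)%N -> pw Delta eps (eta eps lam) n a = 0.
Proof.
case: HA => _ [_ Hsum _ _ _].
have [N [f [Hf ->]]] := Hsum a.
exists N => n hn; rewrite (lf_sum (pw_lin Hco n (eta_lin Hco Hlam))).
apply: big1 => i _; apply: nil_gr (Hf i) _ _.
exact: leq_trans (ltn_ord i) hn.
Qed.

Definition Nb a := proj1_sig (constructive_indefinite_description _ (nilp a)).
Lemma NbP a n : (Nb a <= n)%N -> pw Delta eps (eta eps lam) n a = 0.
Proof. exact: (proj2_sig (constructive_indefinite_description _ (nilp a))). Qed.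

Definition psi0 a : {poly K} := \sum_(n < Nb a) pw Delta eps (eta eps lam) n a *: binp K n.

Lemma psi0_eval k a : (psi0 a).[k%:R] = pw Delta eps lam k a.
Proof.
rewrite horner_sum (pw_binom Hco k a Hlam).
rewrite (eq_bigr (fun n : 'I_(Nb a) => pw Delta eps (eta eps lam) n a * 'C(k, n)%:R)); last first.
  by move=> n _; rewrite hornerZ (binp_eval charK0).
rewrite (@sum_ext0 _ (fun n => pw Delta eps (eta eps lam) n a * 'C(k, n)%:R) (Nb a) (Nb a + k.+1)); last first.
- by move=> i h1 _; rewrite NbP // mul0r.
- exact: leq_addr.
rewrite (@sum_ext0 _ (fun n => 'C(k, n)%:R * pw Delta eps (eta eps lam) n a) k.+1 (Nb a + k.+1)); last first.
- by move=> i h1 _; rewrite bin_small // mul0r.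
- exact: leq_addl.
by apply: eq_bigr => i _; rewrite mulrC.
Qed.

Lemma psi0_morph : coalg_morph psi0 Delta eps (@poly_Delta K) (@poly_eps K).
Proof.
split.
- move=> c x y; apply: (poly_ext charK0) => k.
  by rewrite hornerD hornerZ !psi0_eval (pw_lin Hco k.+1 Hlam).
- move=> a; apply: (teq2_eval charK0) => k l.
  rewrite big_map polyDelta_eval -natrD psi0_eval -(pw_add Hco _ _ _ Hlam).
  by apply: eq_bigr => p _ /=; rewrite !psi0_eval.
- by move=> a; have := psi0_eval 0 a; rewrite mulr0n.
Qed.

Lemma psi0_eps' a : poly_eps' (psi0 a) = lam a.
Proof. by have := psi0_eval 1 a; rewrite mulr1n pw1. Qed.

End Graded.

Section Bi.
Variable K : fieldType.
Variables (A : lmodType K) (m : A -> A -> A) (u : A)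
  (Delta : A -> seq (A * A)) (eps : A -> K).
Hypothesis Hbi : bialgebra m u Delta eps.

Let Hco : coalgebra Delta eps. Proof. by case: Hbi. Qed.

Lemma pw_mul (l : A -> K) : linform l -> (forall a b, l (m a b) = l a * l b) ->
  forall k a b, pw Delta eps l k (m a b) = pw Delta eps l k a * pw Delta eps l k b.
Proof.
move=> Hl Hlm k; elim: k => [|k IH] a b.
  by case: Hbi => _ _ _ H _; rewrite /= H.
case: Hbi => _ _ [HDm _] _ _.
rewrite /= /conv (conv_teq (pw_lin Hco k Hl) Hl (HDm a b)) /tmul big_allpairs_dep /=.
rewrite mulr_suml; apply: eq_bigr => p _; rewrite mulr_sumr; apply: eq_bigr => q _ /=.
rewrite IH Hlm; ring.
Qed.

Lemma pw_unit (l : A -> K) : linform l -> l u = 1 -> forall k, pw Delta eps l k u = 1.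
Proof.
move=> Hl Hu; elim=> [|k IH].
  by case: Hbi.
case: Hbi => _ _ [_ HDu] _ _.
by rewrite /= /conv (conv_teq (pw_lin Hco k Hl) Hl HDu) big_seq1 /= IH Hu mulr1.
Qed.
End Bi.

Section Coint.
Variable K : fieldType.
Variables (A : lmodType K) (m : A -> A -> A) (u : A)
  (Delta : A -> seq (A * A)) (eps : A -> K)
  (delta : A -> seq (A * A)) (epsd : A -> K).
Hypothesis Hci : cointeraction m u Delta eps delta epsd.
Variable l : A -> K.
Hypothesis Hl : linform l.
Hypothesis Hle : forall a, l a = epsd a.

Let Hbi : bialgebra m u Delta eps. Proof. by case: Hci. Qed.
Let Hbd : bialgebra m u delta epsd. Proof. by case: Hci. Qed.
Let Hco : coalgebra Delta eps. Proof. by case: Hbi. Qed.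
Let Hcd : coalgebra delta epsd. Proof. by case: Hbd. Qed.
Let Hlm a b : l (m a b) = l a * l b.
Proof. by rewrite !Hle; case: Hbd => _ _ _ H _; rewrite H. Qed.

Lemma coint k j a :
  \sum_(p <- delta a) pw Delta eps l k.+1 p.1 * pw Delta eps l j.+1 p.2
  = pw Delta eps l (k.+1 * j.+1) a.
Proof.
set nu := pw Delta eps l j.+1.
have Hnu : linform nu by apply: pw_lin.
have Hnum a1 b1 : nu (m a1 b1) = nu a1 * nu b1 by apply: (pw_mul Hbi).
have base a1 : \sum_(p <- delta a1) l p.1 * nu p.2 = nu a1.
  rewrite -(cL Hcd a1 Hnu); apply: eq_bigr => p _; by rewrite Hle.
elim: k a => [|k IH] a.
  rewrite mul1n -/nu -(base a); apply: eq_bigr => p _; by rewrite pw1.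
have Hk := pw_lin Hco k.+1 Hl.
case: Hci => _ _ Hc.
have T := Hc a _ (tri_prod Hk Hl Hnu).
rewrite !big_allpairs_dep /= in T.
transitivity (\sum_(p <- delta a) \sum_(q <- Delta p.1) pw Delta eps l k.+1 q.1 * l q.2 * nu p.2).
  by apply: eq_bigr => p _; rewrite /= /conv mulr_suml.
rewrite T mulSn addnC -(pw_add Hco _ _ _ Hl).
apply: eq_bigr => p _; rewrite -IH -/nu -(base p.2) mulr_suml.
rewrite big_allpairs /=; apply: eq_bigr => q _; rewrite mulr_sumr; apply: eq_bigr => r _ /=.
rewrite Hnum /=; ring.
Qed.
End Coint.

Unset Implicit Arguments.
Theorem proposition64 (K : fieldType) (charK0 : [pchar K] =i pred0)
  (A : lmodType K) (gr : nat -> A -> Prop)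
  (Delta : A -> seq (A * A)) (eps : A -> K)
  (HA : graded_connected_coalgebra Delta eps gr)
  (lam : A -> K) (Hlam : linform lam)
  (Hlam1 : forall one : A, gr 0%N one -> eps one = 1 -> lam one = 1) :
  (* (1) *)
  (exists! psi : A -> {poly K},
      coalg_morph psi Delta eps (@poly_Delta K) (@poly_eps K) /\
      forall a, poly_eps' (psi a) = lam a)
  /\
  forall psi : A -> {poly K},
    coalg_morph psi Delta eps (@poly_Delta K) (@poly_eps K) ->
    (forall a, poly_eps' (psi a) = lam a) ->
    (* (2) *)
    (forall (m : A -> A -> A) (u : A), bialgebra m u Delta eps ->
       (bialg_morph psi m u Delta eps *%R 1 (@poly_Delta K) (@poly_eps K)
        <-> character m u lam))
    /\
    (* (3) *)
    (forall (m : A -> A -> A) (u : A) (delta : A -> seq (A * A)) (epsd : A -> K),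
       cointeraction m u Delta eps delta epsd ->
       (cointeraction_morph psi m u Delta eps delta epsd
          *%R 1 (@poly_Delta K) (@poly_eps K) (@poly_delta K) (@poly_eps' K)
        <-> forall a, lam a = epsd a)).
Proof.
have Hco : coalgebra Delta eps by case: HA.
split.
  exists (psi0 HA Hlam Hlam1); split; first split.
  - exact: psi0_morph.
  - exact: psi0_eps'.
  move=> psi [Hm He]; apply: functional_extensionality => a.
  apply: (poly_ext charK0) => k.
  by rewrite (psi0_eval charK0) (morph_eval Hm He).
move=> psi Hm He.
have Ev := morph_eval Hm He.
have Halg m u : bialgebra m u Delta eps -> character m u lam ->
    alg_morph psi m u *%R 1.
  move=> Hbi [_ Hlm Hlu]; split; first by case: Hm.
  - move=> a b; apply: (poly_ext charK0) => k.
    by rewrite hornerM !Ev (pw_mul Hbi).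
  - by apply: (poly_ext charK0) => k; rewrite Ev hornerC (pw_unit Hbi).
split.
  move=> m u Hbi; split; last by move=> Hc; split; [exact: Halg | exact: Hm].
  move=> [[_ Hmul Hu] _]; split => //.
    by move=> a b; rewrite -!He /poly_eps' Hmul hornerM.
  by rewrite -He /poly_eps' Hu hornerC.
move=> m u delta epsd Hci; split.
  by move=> [_ [_ [_ _ Hd]]] a; rewrite -He Hd.
move=> Hle.
have [Hbi Hbd _] := Hci.
have Hch : character m u lam.
  split => //.
    by move=> a b; rewrite !Hle; case: Hbd => _ _ _ H _; rewrite H.
  by rewrite Hle; case: Hbd.
split; split; try exact: Halg; first exact: Hm.
split; first by case: Hm.
- move=> a; apply: (teq2_eval charK0) => k j.
  rewrite big_map polydelta_eval -natrM Ev -(coint Hci Hlam Hle).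
  by apply: eq_bigr => p _ /=; rewrite !Ev.
- by move=> a; rewrite He Hle.
Qed.
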